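(* Let $(\Lambda(x_1,x_2,x_3,x_4;y_1,y_2,y_3,y_4),\partial)$ be as in the context, let $\alpha\in\mathrm{aut}_\sharp$ with $\alpha(x_1)=x_1$, $\alpha(x_i)=x_i+A_i$ ($i=2,3,4$), and write $P_1=\sum_{k=0}^{s}\theta_k x_4^k$ with $\theta_k\in\mathbb{Q}[x_1,x_2,x_3]$, $\theta_s\neq0$. Then for every $0\le i\le s-1$, $$\alpha(\theta_i)=\theta_i+\sum_{k=1}^{s-i}(-1)^k\binom{k+i}{k}\theta_{k+i}A_4^{k}.$$
   Context: Setting: $x_1,\dots,x_4$ are generators of positive even degrees with $|x_1|\le|x_2|\le|x_3|\le|x_4|$, $y_1,\dots,y_4$ are of odd degree, $(\Lambda(x_1,\dots,x_4;y_1,\dots,y_4),\partial)$ is the free graded-commutative cochain algebra over $\mathbb{Q}$ with $\partial x_i=0$, $\partial y_i=P_i\in\mathbb{Q}[x_1,\dots,x_4]$, where $P_1,\dots,P_4$ is a regular sequence and $|P_1|\le|P_2|\le|P_3|\le|P_4|$. $\mathrm{aut}_\sharp$ is the group of cochain algebra automorphisms inducing the identity on the indecomposables $\mathrm{span}(x_i,y_i)$; for $\alpha\in\mathrm{aut}_\sharp$ one has $\alpha(x_1)=x_1$ and $\alpha(x_i)=x_i+A_i$ with $A_i$ polynomials in the $x_j$. *)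

(* Defs.v *)
From HB Require Import structures.
From mathcomp Require Import all_boot all_order all_algebra.
From mathcomp Require Import mpoly.
Set Implicit Arguments. Unset Strict Implicit. Unset Printing Implicit Defensive.
Import Order.TTheory GRing.Theory Num.Theory.
Local Open Scope ring_scope.

(* Q[x_1,...,x_4]; variable x_{i+1} is 'X_i for i : 'I_4. *)
Notation qpoly := {mpoly rat[4]}.

(* The free graded-commutative algebra Lambda(x_1..x_4; y_1..y_4) over Q:
   an element f is  sum_{S subset {1..4}} f(S) * y_S, with y_S = y_{s1}...y_{sk}
   (s1 < ... < sk) and f(S) in Q[x]. *)
Definition Lam := {ffun {set 'I_4} -> qpoly}.

Definition x1 : 'I_4 := @Ordinal 4 0 isT.
Definition x4 : 'I_4 := @Ordinal 4 3 isT.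

Definition emb (p : qpoly) : Lam := [ffun S => if S == set0 then p else 0].
Definition lam_one : Lam := emb 1.
Definition lam_x (i : 'I_4) : Lam := emb 'X_i.
Definition lam_y (i : 'I_4) : Lam := [ffun S => if S == [set i] then 1 else 0].

(* sign of y_S * y_T = (-1)^(inv S T) y_(S u T) for disjoint S T *)
Definition inv_count (S T : {set 'I_4}) : nat :=
  #|[set p : 'I_4 * 'I_4 | [&& p.1 \in S, p.2 \in T & (p.2 < p.1)%N]]|.

Definition lam_mul (f g : Lam) : Lam :=
  [ffun U : {set 'I_4} => \sum_(S : {set 'I_4}) \sum_(T : {set 'I_4} |
               [disjoint S & T] && (S :|: T == U))
               ((-1) ^+ inv_count S T) *: (f S * g T)].

(* differential: d x_i = 0, d y_i = P_i, extended as a derivation *)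
Definition lam_d (P : 'I_4 -> qpoly) (f : Lam) : Lam :=
  [ffun U : {set 'I_4} => \sum_(j : 'I_4 | j \notin U)
               ((-1) ^+ #|[set s in U | (s < j)%N]|) *: (P j * f (j |: U))].

(* weighted degree of a monomial, |x_{i+1}| = dx i *)
Definition wdeg (dx : 'I_4 -> nat) (m : 'X_{1..4}) : nat := \sum_(i < 4) m i * dx i.

Definition poly_homog (dx : 'I_4 -> nat) (n : nat) (p : qpoly) : Prop :=
  forall m, p@_m != 0 -> wdeg dx m = n.

Definition lam_homog (dx dy : 'I_4 -> nat) (n : nat) (f : Lam) : Prop :=
  forall S m, (f S)@_m != 0 -> (wdeg dx m + \sum_(i in S) dy i)%N = n.

(* Lambda^+ : elements with no component in degree 0 (all generators have
   positive degree, so this is "zero constant term") *)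
Definition lam_pos (f : Lam) : Prop := (f set0)@_0%MM = 0.

Definition lam_dec (f : Lam) : Prop :=
  exists r : seq (Lam * Lam),
    (forall p, p \in r -> lam_pos p.1 /\ lam_pos p.2) /\
    f = \sum_(p <- r) lam_mul p.1 p.2.

Definition in_ideal (P : 'I_4 -> qpoly) (k : nat) (q : qpoly) : Prop :=
  exists c : 'I_4 -> qpoly, q = \sum_(j < 4 | (j < k)%N) c j * P j.

Definition regular_seq (P : 'I_4 -> qpoly) : Prop :=
  (forall k : 'I_4, forall q, in_ideal P k (q * P k) -> in_ideal P k q) /\
  ~ in_ideal P 4 1.

Definition sullivan_setting (dx dy : 'I_4 -> nat) (P : 'I_4 -> qpoly) : Prop :=
  (forall i, (0 < dx i)%N /\ ~~ odd (dx i)) /\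
      (forall i, odd (dy i)) /\
      (forall i j : 'I_4, (i <= j)%N -> (dx i <= dx j)%N) /\
      (forall i, poly_homog dx (dy i).+1 (P i)) /\
      (forall i j : 'I_4, (i <= j)%N -> (dy i <= dy j)%N)   (* |P_i| <= |P_j| *)
    /\ regular_seq P.

(* aut_sharp: cochain algebra automorphisms inducing the identity on the
   indecomposables Lambda^+ / (Lambda^+ . Lambda^+). *)
Definition aut_sharp (dx dy : 'I_4 -> nat) (P : 'I_4 -> qpoly) (a : Lam -> Lam) : Prop :=
  (forall f g, a (f + g) = a f + a g) /\
      (forall (c : rat) f, a (c *: f) = c *: a f) /\
      (forall f g, a (lam_mul f g) = lam_mul (a f) (a g)) /\
      a lam_one = lam_one /\
      (forall n f, lam_homog dx dy n f -> lam_homog dx dy n (a f)) /\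
      (forall f, a (lam_d P f) = lam_d P (a f)) /\
      bijective a
    /\ (forall f, lam_pos f -> lam_dec (a f - f)).

(* Main.v *)
Require Import Defs.
From HB Require Import structures.
From mathcomp Require Import all_boot all_order all_algebra.
From mathcomp Require Import mpoly zify.
Set Implicit Arguments. Unset Strict Implicit. Unset Printing Implicit Defensive.
Import Order.TTheory GRing.Theory Num.Theory.
Local Open Scope ring_scope.
Local Notation Q4 := {mpoly rat[4]}.
From mathcomp Require Import ring.

Lemma inv_count00 : inv_count set0 set0 = 0%N.
Proof. by apply/eqP; rewrite cards_eq0; apply/eqP/setP => p; rewrite !inE. Qed.

Lemma lam_mul_set0 (f g : Lam) : lam_mul f g set0 = f set0 * g set0.
Proof.
rewrite ffunE (bigD1 set0) //= [X in _ + X]big1 ?addr0 => [|S HS]; last first.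
  by apply: big1 => T /andP[_]; rewrite setU_eq0 (negbTE HS).
rewrite (bigD1 set0) /=; last by rewrite -setI_eq0 set0I setU0 eqxx.
rewrite big1 ?addr0 ?inv_count00 ?expr0 ?scale1r // => T /andP[/andP[_]].
by rewrite setU_eq0 eqxx /= => /eqP ->; rewrite eqxx.
Qed.

Lemma emb_add p q : emb (p + q) = emb p + emb q.
Proof. by apply/ffunP => S; rewrite !ffunE; case: ifP; rewrite ?addr0. Qed.

Lemma emb_sub p q : emb (p - q) = emb p - emb q.
Proof. by apply/ffunP => S; rewrite !ffunE; case: ifP; rewrite ?subr0. Qed.

Lemma emb0 : emb 0 = 0.
Proof. by apply/ffunP => S; rewrite !ffunE; case: ifP. Qed.

Lemma emb_scale (c : rat) p : emb (c *: p) = c *: emb p.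
Proof. by apply/ffunP => S; rewrite !ffunE; case: ifP; rewrite ?scaler0. Qed.

Lemma emb_inj p q : emb p = emb q -> p = q.
Proof. by move/(congr1 (fun f : Lam => f set0)); rewrite !ffunE eqxx. Qed.

Lemma emb_mul p q : emb (p * q) = lam_mul (emb p) (emb q).
Proof.
apply/ffunP => U; case: (U =P set0) => [->|HU].
  by rewrite lam_mul_set0 !ffunE eqxx.
rewrite ffunE (introF eqP HU) ffunE; symmetry; apply: big1 => S _.
apply: big1 => T /andP[_ /eqP HST]; rewrite !ffunE.
case: (S =P set0) => HS; last by rewrite mul0r scaler0.
case: (T =P set0) => HT; last by rewrite mulr0 scaler0.
by exfalso; apply: HU; rewrite -HST HS HT setU0.
Qed.

Lemma comp_assoc (p : Q4) (t u : 4.-tuple Q4) :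
  (p \mPo t) \mPo u = p \mPo [tuple (tnth t i \mPo u) | i < 4].
Proof.
rewrite !(comp_mpolyEX p) raddf_sum /=; apply: eq_bigr => m _.
rewrite comp_mpolyZ; congr (_ *: _).
rewrite !comp_mpolyX rmorph_prod /=; apply: eq_bigr => i _.
by rewrite rmorphXn tnth_mktuple.
Qed.

Definition t0 : 4.-tuple Q4 := [tuple (if i == x4 then 0 else 'X_i : Q4) | i < 4].
Definition Ifree (p : Q4) := p \mPo t0 = p.

Lemma Ifree_comp p t : Ifree p ->
  p \mPo t = p \mPo [tuple (if i == x4 then 0 else tnth t i : Q4) | i < 4].
Proof.
move=> Hp; rewrite -{1}Hp comp_assoc; congr comp_mpoly.
apply: eq_from_tnth => i; rewrite !tnth_mktuple.
by case: ifP => _; rewrite ?comp_mpoly0 // comp_mpolyXU -tnth_nth.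
Qed.

Lemma Cfree_Ifree p : (forall m, p@_m != 0 -> m x4 = 0%N) -> Ifree p.
Proof.
move=> Hp; rewrite /Ifree comp_mpolyEX {3}[p]mpolyE; apply: eq_big_seq => m.
rewrite mcoeff_msupp => /Hp Hm; congr (_ *: _).
rewrite comp_mpolyX mpolyXE_id; apply: eq_bigr => i _; rewrite tnth_mktuple.
by case: eqP => [->|//]; rewrite Hm !expr0.
Qed.

Lemma mulcoef2 (f g : Q4) m : f@_0 = 0 -> g@_0 = 0 -> (f * g)@_m != 0 -> (2 <= mdeg m)%N.
Proof.
move=> Hf Hg; rewrite mcoeffM; apply: contraR; rewrite -ltnNge => Hm.
apply/eqP; apply: big1 => k /eqP Hk.
have E := congr1 mdeg Hk; rewrite mdegD in E; have : (mdeg k.1 + mdeg k.2 < 2)%N by rewrite -E.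
case E1: (mdeg k.1) => [|d1].
  by move/eqP: E1; rewrite mdeg_eq0 => /eqP ->; rewrite Hf mul0r.
case E2: (mdeg k.2) => [|d2].
  by move/eqP: E2; rewrite mdeg_eq0 => /eqP ->; rewrite Hg mulr0.
by rewrite addSn addnS.
Qed.

Lemma X4_neq0 : ('X_x4 : Q4) != 0.
Proof. by apply/eqP => /(congr1 (mcoeff U_(x4))); rewrite mcoeffX eqxx mcoeff0 => /eqP; rewrite oner_eq0. Qed.

Lemma uniq0 n (d : nat -> Q4) : (forall k, Ifree (d k)) ->
  \sum_(k < n) d k * 'X_x4 ^+ k = 0 -> forall k, (k < n)%N -> d k = 0.
Proof.
elim: n d => [//|n IH] d Hd; rewrite big_ord_recl /= => H.
have H0 : d 0%N = 0.
  have := congr1 (comp_mpoly t0) H; rewrite rmorphD rmorph_sum rmorph0 /= rmorphM /= expr0 rmorph1 mulr1 Hd.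
  rewrite big1 ?addr0 // => i _; rewrite rmorphM rmorphXn /= comp_mpolyXU -tnth_nth tnth_mktuple eqxx.
  by rewrite expr0n /= mulr0.
move: H; rewrite H0 mul0r add0r.
have -> : \sum_(i < n) d (bump 0 i) * 'X_x4 ^+ (bump 0 i) = 'X_x4 * \sum_(i < n) d i.+1 * 'X_x4 ^+ i.
  by rewrite mulr_sumr; apply: eq_bigr => i _; rewrite /bump /= add1n exprS mulrCA.
move/eqP; rewrite mulf_eq0 (negbTE X4_neq0) /= => /eqP H1.
by case=> [//|k] Hk; apply: (IH (fun k => d k.+1)).
Qed.

Section Ident.
Variable R : comRingType.
Variables (s : nat) (th : nat -> R) (A y : R).

Definition phi i := th i + \sum_(1 <= k < (s - i).+1)
                     (-1) ^+ k * ('C(k + i, k))%:R * th (k + i)%N * A ^+ k.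

Lemma phiE i : (i <= s)%N ->
  phi i = \sum_(k < s.+1) th k * ('C(k, i))%:R * (- A) ^+ (k - i).
Proof.
move=> Hi; rewrite -(big_mkord xpredT (fun k => th k * ('C(k, i))%:R * (- A) ^+ (k - i))).
rewrite (big_cat_nat (n := i)) ?leq0n ?(leqW Hi) //=.
rewrite big_nat big1 ?add0r => [|k /andP[_ Hk]]; last by rewrite bin_small // mulr0 mul0r.
rewrite (big_addn 0 _ i) subSn // big_ltn //= add0n binn subnn expr0 !mulr1 /phi.
congr (_ + _); apply: eq_bigr => j _.
rewrite addnK [(- A) ^+ _]exprNn.
have -> : 'C(j + i, i) = 'C(j + i, j) by rewrite -[X in 'C(_, X)](addKn j i) bin_sub ?leq_addr.
ring.
Qed.

Lemma phi_ident :
  \sum_(i < s.+1) phi i * y ^+ i = \sum_(k < s.+1) th k * (y - A) ^+ k.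
Proof.
transitivity (\sum_(i < s.+1) \sum_(k < s.+1) th k * (('C(k, i))%:R * (- A) ^+ (k - i) * y ^+ i)).
  apply: eq_bigr => i _; rewrite phiE -1?ltnS // mulr_suml; apply: eq_bigr => k _; ring.
rewrite exchange_big /=; apply: eq_bigr => k _; rewrite -mulr_sumr; congr (_ * _).
rewrite addrC exprDn (big_ord_widen _ (fun i => ((- A) ^+ (k - i) * y ^+ i) *+ 'C(k, i)) (ltn_ord k)).
rewrite [RHS]big_mkcond /=; apply: eq_bigr => i _; case: ifP => Hik.
  by rewrite -mulr_natl; ring.
by rewrite bin_small ?mul0r // ltnNge -ltnS Hik.
Qed.
End Ident.

Lemma homog_sub dx dy n (f h : Lam) :
  lam_homog dx dy n f -> lam_homog dx dy n h -> lam_homog dx dy n (f - h).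
Proof.
move=> Hf Hh S m; rewrite !ffunE mcoeffB => H.
case: (eqVneq (f S)@_m 0) => [E|]; last exact: Hf.
by apply: Hh; move: H; rewrite E sub0r oppr_eq0.
Qed.

Lemma wdeg0 dx : wdeg dx 0%MM = 0%N.
Proof. by rewrite /wdeg big1 // => i _; rewrite mnm0E. Qed.

Lemma wdegU dx i : wdeg dx U_(i)%MM = dx i.
Proof.
rewrite /wdeg (bigD1 i) //= mnm1E eqxx mul1n big1 ?addn0 // => j Hj.
by rewrite mnm1E eq_sym (negbTE Hj).
Qed.

Lemma homog_lx dx dy i : lam_homog dx dy (dx i) (lam_x i).
Proof.
move=> S m; rewrite ffunE; case: ifP => [/eqP ->|_]; last by rewrite mcoeff0 eqxx.
by rewrite mcoeffX; case: (U_(i)%MM =P m) => [<- _|]; rewrite ?eqxx // big_set0 addn0 wdegU.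
Qed.

Lemma homog_ly dx dy i : lam_homog dx dy (dy i) (lam_y i).
Proof.
move=> S m; rewrite ffunE; case: ifP => [/eqP ->|_]; last by rewrite mcoeff0 eqxx.
by rewrite mcoeff1; case: (m =P 0%MM) => [-> _|]; rewrite ?eqxx // wdeg0 big_set1.
Qed.

Lemma lam_d_y1 P : lam_d P (lam_y x1) = emb (P x1).
Proof.
apply/ffunP => U; rewrite !ffunE; case: (U =P set0) => [->|HU].
  rewrite (bigD1 x1) ?inE //= big1 ?addr0 => [|j Hj]; last first.
    rewrite ffunE setU0 (_ : ([set j] == [set x1]) = false) ?mulr0 ?scaler0 //.
    by apply/negbTE; apply: contra (andP Hj).2 => /eqP/set1_inj ->.
  rewrite ffunE setU0 eqxx mulr1.
  have -> : #|[set s : 'I_4 in set0 | (s < x1)%N]| = 0%N.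
    by apply/eqP; rewrite cards_eq0; apply/eqP/setP => k; rewrite !inE.
  by rewrite expr0 scale1r.
apply: big1 => j Hj; rewrite ffunE; case: eqP => E; last by rewrite mulr0 scaler0.
exfalso; case/set0Pn: (introN eqP HU) => u Hu.
have : j \in [set x1] by rewrite -E setU11.
have : u \in [set x1] by rewrite -E setU1r.
by rewrite !inE => /eqP Eu /eqP Ej; move: Hj; rewrite Ej -Eu Hu.
Qed.

Lemma lam_mul_single0 (f h : Lam) j :
  lam_pos f -> lam_pos h -> ((lam_mul f h) [set j])@_0 = 0.
Proof.
move=> Hf Hh; rewrite ffunE raddf_sum; apply: big1 => S _.
rewrite raddf_sum; apply: big1 => T /andP[Hd /eqP HU].
rewrite /= mcoeffZ ((@mcoeff0_is_multiplicative 4 rat).1 (f S) (h T)).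
case: (S =P set0) => [->|HS]; first by rewrite Hf mul0r mulr0.
case: (T =P set0) => [->|HT]; first by rewrite Hh !mulr0.
exfalso; have := cardsU S T; rewrite HU cards1.
move: Hd; rewrite -setI_eq0 => /eqP ->; rewrite cards0 subn0.
have := introN eqP HS; have := introN eqP HT; rewrite -!card_gt0.
lia.
Qed.

Lemma wdeg_even dx m : (forall i, ~~ odd (dx i)) -> ~~ odd (wdeg dx m).
Proof.
move=> H; rewrite /wdeg; elim/big_ind: _ => //.
  by move=> x y Hx Hy; rewrite oddD (negbTE Hx) (negbTE Hy).
by move=> i _; rewrite oddM (negbTE (H i)) andbF.
Qed.

Lemma wdeg_eq0 dx m : (forall i, (0 < dx i)%N) -> wdeg dx m = 0%N -> m = 0%MM.
Proof.
move=> H /eqP; rewrite /wdeg sum_nat_eq0 => /forallP Hm.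
apply/mnmP => i; rewrite mnm0E; have := Hm i; rewrite /= muln_eq0.
by case/orP => /eqP // E; move: (H i); rewrite E.
Qed.

Lemma dec_sum (g : Lam) : lam_dec g -> forall j, (g [set j])@_0 = 0.
Proof.
case=> r [Hr ->] j; rewrite sum_ffunE raddf_sum; apply: big1_seq => p /andP[_ Hp] /=.
by have [H1 H2] := Hr p Hp; rewrite lam_mul_single0.
Qed.

Lemma ly_fixed dx dy (g : Lam) :
  (forall i, (0 < dx i)%N /\ ~~ odd (dx i)) -> (forall i, odd (dy i)) ->
  (forall j, (dy x1 <= dy j)%N) ->
  lam_homog dx dy (dy x1) g -> lam_dec g -> g = 0.
Proof.
move=> Hdx Hdy Hmon Hg Hdec; apply/ffunP => S; apply/mpolyP => m.
rewrite ffunE mcoeff0; apply/eqP; apply: contraT => Hnz.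
have Hdeg := Hg S m Hnz.
case: (S =P set0) => [ES|/eqP/set0Pn [j Hj]].
  move: Hdeg; rewrite ES big_set0 addn0 => Hw.
  by have := wdeg_even m (fun i => (Hdx i).2); rewrite Hw Hdy.
move: Hdeg; rewrite (bigD1 j) //=; set r := (\sum_(i | _) _)%N => Hdeg.
have Hj1 := Hmon j.
have Hw : wdeg dx m = 0%N by lia.
have Hrest : r = 0%N by lia.
have Em := wdeg_eq0 (fun i => (Hdx i).1) Hw.
have ES : S = [set j].
  apply/setP => k; rewrite inE; apply/idP/eqP => [Hk|->//].
  apply/eqP; apply: contraT => Hkj.
  move/eqP: Hrest; rewrite /r sum_nat_eq0 => /forallP /(_ k); rewrite Hk Hkj /= => /eqP E.
  by have := Hdy k; rewrite E.
by move: Hnz; rewrite ES Em dec_sum // eqxx.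
Qed.

Lemma A_free dx dy (a : Lam -> Lam) (i : 'I_4) (Ai : Q4) :
  (forall i, (0 < dx i)%N /\ ~~ odd (dx i)) ->
  (forall i j : 'I_4, (i <= j)%N -> (dx i <= dx j)%N) ->
  (forall n f, lam_homog dx dy n f -> lam_homog dx dy n (a f)) ->
  (forall f, lam_pos f -> lam_dec (a f - f)) ->
  a (lam_x i) = emb ('X_i + Ai) -> forall m, Ai@_m != 0 -> m x4 = 0%N.
Proof.
move=> Hdx Hmon Hhom Hdec Ha.
have Hpos : lam_pos (lam_x i).
  rewrite /lam_pos ffunE eqxx mcoeffX; case: (U_(i)%MM =P 0%MM) => // /(congr1 mdeg).
  by rewrite mdeg1 mdeg0.
have Hd := Hdec _ Hpos; rewrite Ha in Hd.
have E : emb ('X_i + Ai) - lam_x i = emb Ai by rewrite /lam_x -emb_sub addrAC subrr add0r.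
rewrite E in Hd; case: Hd => r [Hr Hsum].
have EA : Ai = \sum_(p <- r) p.1 set0 * p.2 set0.
  have := congr1 (fun f : Lam => f set0) Hsum; rewrite /= ffunE eqxx sum_ffunE => ->.
  by apply: eq_bigr => p _; rewrite lam_mul_set0.
move=> m Hm.
have Hdeg2 : (2 <= mdeg m)%N.
  move: Hm; rewrite EA raddf_sum /=; apply: contraR; rewrite -ltnNge => Hlt.
  apply/eqP; apply: big1_seq => p /andP[_ Hp]; have [H1 H2] := Hr p Hp.
  apply/eqP; apply: contraT => Hnz; have := mulcoef2 H1 H2 Hnz; by rewrite leqNgt Hlt.
have Hh := Hhom _ _ (@homog_lx dx dy i); rewrite Ha in Hh.
have := Hh set0 m; rewrite ffunE eqxx mcoeffD mcoeffX.
have -> : (U_(i)%MM == m) = false.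
  by apply/negbTE/eqP => E1; move: Hdeg2; rewrite -E1 mdeg1.
rewrite add0r => /(_ Hm); rewrite big_set0 addn0 => Hw.
have Hi4 : (dx i <= dx x4)%N by apply: Hmon; rewrite -ltnS.
apply/eqP; apply: contraT => H4.
move: Hw; rewrite /wdeg (bigD1 x4) //= => Hw.
move: Hdeg2; rewrite mdegE (bigD1 x4) //= => Hdeg2.
move: Hw Hdeg2.
have HW : (\sum_(j | j != x4) m j <= \sum_(j | j != x4) m j * dx j)%N.
  by apply: leq_sum => j _; rewrite leq_pmulr // (Hdx j).1.
move: HW; set W := (\sum_(j | _) (m j * dx j))%N; set M := (\sum_(j | _) m j)%N.
have := (Hdx x4).1; move: H4; rewrite -lt0n.
set m4 := m x4; set d4 := dx x4; move: Hi4; rewrite -/d4.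
nia.
Qed.

Lemma Ifree_X j : j != x4 -> Ifree 'X_j.
Proof. by move=> Hj; rewrite /Ifree comp_mpolyXU -tnth_nth tnth_mktuple (negbTE Hj). Qed.

Lemma IfreeD p q : Ifree p -> Ifree q -> Ifree (p + q).
Proof. by rewrite /Ifree rmorphD /= => -> ->. Qed.
Lemma IfreeB p q : Ifree p -> Ifree q -> Ifree (p - q).
Proof. by rewrite /Ifree rmorphB /= => -> ->. Qed.
Lemma IfreeM p q : Ifree p -> Ifree q -> Ifree (p * q).
Proof. by rewrite /Ifree rmorphM /= => -> ->. Qed.
Lemma IfreeXn p k : Ifree p -> Ifree (p ^+ k).
Proof. by rewrite /Ifree rmorphXn /= => ->. Qed.
Lemma Ifree_nat k : Ifree (k%:R).
Proof. by rewrite /Ifree rmorph_nat. Qed.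
Lemma IfreeN1 : Ifree (-1).
Proof. by rewrite /Ifree rmorphN1. Qed.
Lemma Ifree_sum I r (P : pred I) (F : I -> Q4) :
  (forall i, P i -> Ifree (F i)) -> Ifree (\sum_(i <- r | P i) F i).
Proof. by move=> H; elim/big_ind: _ => //; [rewrite /Ifree rmorph0 | exact: IfreeD]. Qed.

Lemma uniqB n (d : nat -> Q4) B : Ifree B -> (forall k, Ifree (d k)) ->
  \sum_(k < n) d k * ('X_x4 + B) ^+ k = 0 -> forall k, (k < n)%N -> d k = 0.
Proof.
move=> HB Hd H.
pose tt : 4.-tuple Q4 := [tuple (if j == x4 then 'X_j - B else 'X_j : Q4) | j < 4].
have Hfix : forall p, Ifree p -> p \mPo tt = p.
  move=> p Hp; rewrite /tt (Ifree_comp _ Hp) -{2}Hp; congr comp_mpoly.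
  by apply: eq_from_tnth => j; rewrite !tnth_mktuple; case: (j == x4).
apply: uniq0 => //; rewrite -[RHS](rmorph0 (comp_mpoly tt)) -[in RHS]H rmorph_sum /=.
apply: eq_bigr => k _; rewrite rmorphM rmorphXn rmorphD /= (Hfix _ (Hd k)) (Hfix _ HB).
by rewrite comp_mpolyXU -tnth_nth tnth_mktuple eqxx subrK.
Qed.

Unset Implicit Arguments.

Theorem proposition3p3
  (dx dy : 'I_4 -> nat) (P : 'I_4 -> {mpoly rat[4]})
  (a : Lam -> Lam) (A : 'I_4 -> {mpoly rat[4]})
  (s : nat) (theta : nat -> {mpoly rat[4]}) :
  sullivan_setting dx dy P ->
  aut_sharp dx dy P a ->
  a (lam_x x1) = lam_x x1 ->
  (forall i : 'I_4, i != x1 -> a (lam_x i) = emb ('X_i + A i)) ->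
  (* P_1 = sum_{k=0}^s theta_k x_4^k with theta_k in Q[x_1,x_2,x_3], theta_s <> 0 *)
  (forall k m, (theta k)@_m != 0 -> m x4 = 0%N) ->
  theta s != 0 ->
  P x1 = \sum_(k < s.+1) theta k * 'X_x4 ^+ k ->
  forall i : nat, (i <= s - 1)%N -> (i < s)%N ->
    a (emb (theta i)) =
    emb (theta i + \sum_(1 <= k < (s - i).+1)
                     (-1) ^+ k * ('C(k + i, k))%:R * theta (k + i)%N * A x4 ^+ k).
Proof.
move=> [Hdx [Hdy [Hdxm [HP [Hdym Hreg]]]]] [Hadd [Hsc [Hmul [H1 [Hhom [Hd [Hbij Hdec]]]]]]].
move=> Hx1 HA Hth Hs HP1 i Hi1 Hi.
pose ts : 4.-tuple {mpoly rat[4]} :=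
  [tuple (if j == x1 then 'X_j else 'X_j + A j : {mpoly rat[4]}) | j < 4].
have a0 : a 0 = 0 by have := Hsc 0 0; rewrite !scale0r.
have Hemb : forall p, a (emb p) = emb (p \mPo ts).
  have Gmul : forall p q, a (emb p) = emb (p \mPo ts) -> a (emb q) = emb (q \mPo ts) ->
      a (emb (p * q)) = emb ((p * q) \mPo ts).
    by move=> p q Hp Hq; rewrite emb_mul Hmul Hp Hq -emb_mul rmorphM.
  have G1 : a (emb 1) = emb (1 \mPo ts) by rewrite comp_mpoly1; exact: H1.
  have GX : forall j, a (emb 'X_j) = emb ('X_j \mPo ts).
    move=> j; rewrite comp_mpolyXU -tnth_nth tnth_mktuple.
    by case: eqP => [->|/eqP Hj]; [exact: Hx1 | exact: HA].
  elim/mpolyind => [|c m p _ _ Hp]; first by rewrite emb0 a0 comp_mpoly0 emb0.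
  rewrite emb_add Hadd emb_scale Hsc Hp comp_mpolyD comp_mpolyZ emb_add emb_scale.
  congr (_ *: _ + _).
  rewrite mpolyXE_id; elim/big_ind: _ => // j _.
  elim: (m j) => [|k IH]; first by rewrite expr0.
  by rewrite exprS; apply: Gmul.
have Hly : a (lam_y x1) = lam_y x1.
  apply/eqP; rewrite -subr_eq0; apply/eqP; apply: (@ly_fixed dx dy) => //.
  - by move=> j; apply: Hdym.
  - by apply: homog_sub; [apply: Hhom|]; apply: homog_ly.
  - apply: Hdec; rewrite /lam_pos ffunE.
    by rewrite (_ : (set0 == [set x1]) = false) ?mcoeff0 // eq_sym; apply/negbTE/set0Pn; exists x1; rewrite inE.
have HP1fix : P x1 \mPo ts = P x1.
  by apply: emb_inj; rewrite -Hemb -lam_d_y1 Hd Hly.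
have HAfree : forall j, j != x1 -> Ifree (A j).
  by move=> j Hj; apply: Cfree_Ifree; apply: (A_free Hdx Hdxm Hhom Hdec (HA j Hj)).
have Hthfree : forall k, Ifree (theta k) by move=> k; apply: Cfree_Ifree; apply: Hth.
have HB : Ifree (A x4) by apply: HAfree.
have Hts4 : ts`_x4 = 'X_x4 + A x4 by rewrite -tnth_nth tnth_mktuple.
have Hsfree : forall p, Ifree p -> Ifree (p \mPo ts).
  move=> p Hp; rewrite /Ifree comp_assoc (Ifree_comp _ Hp) [RHS](Ifree_comp _ Hp).
  congr comp_mpoly; apply: eq_from_tnth => j; rewrite !tnth_mktuple.
  case: (eqVneq j x4) => // Hj4.
  case: (eqVneq j x1) => [->|Hj1]; first by apply: Ifree_X.
  by apply: IfreeD; [apply: Ifree_X | apply: HAfree].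
rewrite Hemb; congr emb.
pose d k := theta k \mPo ts - phi s theta (A x4) k.
have Hdfree : forall k, Ifree (d k).
  move=> k; apply: IfreeB; first by apply: Hsfree.
  rewrite /phi; apply: IfreeD => //; apply: Ifree_sum => j _.
  repeat apply: IfreeM; try exact: Ifree_nat; try exact: Hthfree; apply: IfreeXn => //; exact: IfreeN1.
have Hsum : \sum_(k < s.+1) d k * ('X_x4 + A x4) ^+ k = 0.
  rewrite /d; under eq_bigr do rewrite mulrBl; rewrite sumrB phi_ident addrK -HP1.
  rewrite -[X in _ - X]HP1fix HP1 rmorph_sum /= ; apply/eqP; rewrite subr_eq0; apply/eqP; apply: eq_bigr => k _.
  by rewrite rmorphM rmorphXn /= comp_mpolyXU Hts4.
have := uniqB HB Hdfree Hsum (ltnW Hi); rewrite /d => /eqP; rewrite subr_eq0 => /eqP ->.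
by [].
Qed.
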